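(* Let $\mathcal{A}=\{\alpha_1<\alpha_2<\dots<\alpha_m\}\subset(0,1)$ with $|\mathcal{A}|=m$, and let $d_{\mathcal{A}}=\min_{\alpha\in\mathcal{A}}\min(\alpha,1-\alpha)$. Let $(b_t)_{t\ge1}$ be any sequence of base forecasts with $b_t\in\mathcal{K}$ and $(y_t)_{t\ge1}$ any sequence of real outcomes, and suppose there is $R>0$ with $|y_t-b_t^{\alpha}|\le R$ for all $\alpha\in\mathcal{A}$ and all $t$. Run MultiQT with learning rate $\eta>0$ and initial hidden offset $\tilde\theta_1\in\mathcal{K}$. Then for every $T\ge1$ and every $\alpha\in\mathcal{A}$, $$\Bigg|\frac{1}{T}\sum_{t=1}^T \mathrm{cov}_t^{\alpha}-\alpha\Bigg|\le \frac{2\|\tilde\theta_1\|_2}{\eta T}+\sqrt{\frac{|\mathcal{A}|}{T}+\frac{2R|\mathcal{A}|^{3/2}}{\eta\, d_{\mathcal{A}}\,T}}.$$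
   Context: $\mathcal{K}=\{x\in\mathbb{R}^m: x_1\le x_2\le\dots\le x_m\}$ (coordinates indexed by $\alpha_1,\dots,\alpha_m$), and for a closed convex set $C$, $\Pi_C(x)=\arg\min_{z\in C}\|x-z\|_2^2$ is Euclidean projection; $C-v=\{x-v:x\in C\}$. MultiQT (Multi-Level Quantile Tracker) with learning rate $\eta>0$ and initial hidden offset $\tilde\theta_1\in\mathcal{K}$: for $t=1,2,\dots$, (1) set the played offset $\theta_t=\Pi_{\mathcal{K}-b_t}(\tilde\theta_t)$; (2) output the forecast $q_t=b_t+\theta_t$ (equivalently $q_t=\Pi_{\mathcal{K}}(b_t+\tilde\theta_t)$); (3) after observing $y_t$, set $\mathrm{cov}_t^{\alpha}=\mathbb{1}\{y_t\le q_t^{\alpha}\}$ and update $\tilde\theta_{t+1}^{\alpha}=\tilde\theta_t^{\alpha}-\eta(\mathrm{cov}_t^{\alpha}-\alpha)$ for each $\alpha\in\mathcal{A}$. *)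

(* Defs.v *)
From HB Require Import structures.
From mathcomp Require Import all_boot all_order all_algebra.
From mathcomp Require Import reals.
Set Implicit Arguments. Unset Strict Implicit. Unset Printing Implicit Defensive.
Import Order.TTheory GRing.Theory Num.Theory.
Local Open Scope ring_scope.

Section MultiQT.
Variables (R : realType) (m : nat).

(* vectors in R^m, coordinates indexed by 'I_m (i.e. alpha_1..alpha_m) *)
Definition vec := 'I_m -> R.

Definition inK (x : vec) : Prop := forall i j : 'I_m, (i <= j)%N -> x i <= x j.

Definition sqnorm (x : vec) : R := \sum_(i < m) (x i) ^+ 2.
Definition norm2 (x : vec) : R := Num.sqrt (sqnorm x).

Definition inKshift (b z : vec) : Prop := inK (fun i => z i + b i).

Definition is_proj_Kshift (b v p : vec) : Prop :=
  inKshift b p /\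
  forall z : vec, inKshift b z ->
    sqnorm (fun i => v i - p i) <= sqnorm (fun i => v i - z i).

Definition cov (y : R) (q : vec) (i : 'I_m) : R := (nat_of_bool (y <= q i))%:R.

(* A run of MultiQT. Time is 0-based: index t here is round t+1 of the paper.
   thtil t = hidden offset, th t = played offset, q t = forecast. *)
Definition multiqt_run (alpha : vec) (eta : R) (th1 : vec)
    (b : nat -> vec) (y : nat -> R)
    (thtil th q : nat -> vec) : Prop :=
  thtil 0%N = th1 /\
  forall t : nat,
    is_proj_Kshift (b t) (thtil t) (th t) /\
    (forall i, q t i = b t i + th t i) /\
    (forall i, thtil t.+1 i = thtil t i - eta * (cov (y t) (q t) i - alpha i)).

(* d_A = min_alpha min(alpha, 1 - alpha); the seed 1 is irrelevant when m > 0
   since every term is <= 1/2. *)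
Definition dA (alpha : vec) : R :=
  \big[Num.min/1]_(i < m) Num.min (alpha i) (1 - alpha i).

End MultiQT.

(* Main.v *)
Require Import Defs.
From HB Require Import structures.
From mathcomp Require Import all_boot all_order all_algebra.
From mathcomp Require Import reals.
From mathcomp Require Import ring lra.
Import Order.TTheory GRing.Theory Num.Theory.
Set Implicit Arguments. Unset Strict Implicit.
Local Open Scope ring_scope.

Section Aux.
Variables (R : realType) (m : nat).

Definition dot (u w : 'I_m -> R) : R := \sum_(i < m) u i * w i.

Lemma sqnormD (u w : 'I_m -> R) (s : R) :
  sqnorm (fun i => u i + s * w i) = sqnorm u + 2 * s * dot u w + s ^+ 2 * sqnorm w.
Proof.
rewrite /sqnorm /dot mulr_sumr mulr_sumr -!big_split /=.
by apply: eq_bigr => i _; ring.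
Qed.

Lemma sqnorm_ge0 (u : 'I_m -> R) : 0 <= sqnorm u.
Proof. by apply: sumr_ge0 => i _; apply: sqr_ge0. Qed.

Lemma coord_le_norm (u : 'I_m -> R) i : `|u i| <= norm2 u.
Proof.
rewrite /norm2 -sqrtr_sqr ler_sqrt; last exact: sqnorm_ge0.
rewrite /sqnorm (bigD1 i) //= lerDl.
by apply: sumr_ge0 => j _; apply: sqr_ge0.
Qed.

Lemma proj_dot_ge0 (alpha b thtil th qv : 'I_m -> R) (yt : R) :
  (forall i j : 'I_m, (i <= j)%N -> alpha i <= alpha j) ->
  is_proj_Kshift b thtil th ->
  (forall i, qv i = b i + th i) ->
  0 <= dot (fun i => thtil i - th i) (fun i => cov yt qv i - alpha i).
Proof.
move=> Ha [HK Hmin] Hq.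
set r := (fun i => thtil i - th i).
set g := (fun i => cov yt qv i - alpha i).
set c := dot r g.
rewrite leNgt; apply/negP => cneg.
set s0 := \big[Num.min/1]_(i | qv i < yt) (yt - qv i).
have s0pos : 0 < s0.
  rewrite /s0; apply: (big_ind (fun x => 0 < x)) => //.
    by move=> x z hx hz; rewrite lt_min hx hz.
  by move=> i hi; rewrite subr_gt0.
have s0le : forall i, qv i < yt -> s0 <= yt - qv i.
  move=> i hi; rewrite /s0 (bigD1 i) //=.
  by rewrite ge_min lexx.
set G := sqnorm g.
have Gge0 : 0 <= G by exact: sqnorm_ge0.
set s := Num.min s0 (- c / (G + 1)).
have spos : 0 < s by rewrite lt_min s0pos divr_gt0 // ?oppr_gt0 //; lra.
have ss0 : s <= s0 by rewrite ge_min lexx.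
have sc : s * (G + 1) <= - c.
  by rewrite -ler_pdivlMr; [rewrite ge_min lexx orbT | lra].
have Hz : inKshift b (fun i => th i - s * g i).
  move=> i j hij /=.
  have hq : qv i <= qv j.
    by have := HK i j hij; rewrite /= !Hq; lra.
  have ha := Ha i j hij.
  have hsa : s * alpha i <= s * alpha j by apply: ler_wpM2l =>//; apply: ltW.
  rewrite /g /cov.
  have := Hq i; have := Hq j; move=> hqj hqi.
  case: (boolP (yt <= qv i)) => hi; case: (boolP (yt <= qv j)) => hj /=.
  - lra.
  - by move: hj; rewrite (le_trans hi hq).
  - rewrite -ltNge in hi.
    have := s0le i hi; lra.
  - lra.
have := Hmin _ Hz.
have -> : sqnorm (fun i => thtil i - (th i - s * g i)) = sqnorm (fun i => r i + s * g i).
  by apply: eq_bigr => k _; rewrite /r; congr (_ ^+ 2); ring.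
rewrite sqnormD -/c -/G.
move=> h.
have h2 : 0 <= s * (2 * c + s * G) by nra.
rewrite pmulr_rge0 // in h2.
nra.
Qed.


Lemma comp_bound (Rb yt bi thi qi ai : R) :
  0 < ai < 1 -> `|yt - bi| <= Rb -> qi = bi + thi ->
  - Rb <= thi * ((nat_of_bool (yt <= qi))%:R - ai).
Proof.
move=> /andP[a0 a1]; rewrite ler_norml => /andP[h1 h2] hq.
case: (boolP (yt <= qi)) => hi /=.
- nra.
- rewrite -ltNge in hi; nra.
Qed.

Lemma g_sq_le1 (yt qi ai : R) :
  0 < ai < 1 -> ((nat_of_bool (yt <= qi))%:R - ai) ^+ 2 <= 1.
Proof. move=> /andP[a0 a1]; case: (yt <= qi) => /=; nra. Qed.

End Aux.

Theorem theorem1 (R : realType) (m : nat) (alpha : 'I_m -> R)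
  (eta Rb : R) (th1 : 'I_m -> R) (b : nat -> 'I_m -> R) (y : nat -> R)
  (thtil th q : nat -> 'I_m -> R) :
  (0 < m)%N ->
  (forall i j : 'I_m, (i < j)%N -> alpha i < alpha j) ->
  (forall i, 0 < alpha i < 1) ->
  (forall t, inK (b t)) ->
  0 < Rb ->
  (forall t i, `|y t - b t i| <= Rb) ->
  0 < eta ->
  inK th1 ->
  multiqt_run alpha eta th1 b y thtil th q ->
  forall (T : nat), (1 <= T)%N -> forall i : 'I_m,
    `| (\sum_(t < T) cov (y t) (q t) i) / T%:R - alpha i |
      <= 2 * norm2 th1 / (eta * T%:R)
         + Num.sqrt (m%:R / T%:R
                     + 2 * Rb * (m%:R * Num.sqrt m%:R) / (eta * dA alpha * T%:R)).
Proof.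
move=> m0 Hinc Ha Hb Rb0 Hy eta0 Hth1 [H0 Hrun] T T1 i.
have Hmono : forall i j : 'I_m, (i <= j)%N -> alpha i <= alpha j.
  move=> i' j'; rewrite leq_eqVlt => /orP[/eqP e | /Hinc/ltW //].
  by have -> : i' = j' by apply: val_inj.
set g := fun t k => cov (y t) (q t) k - alpha k.
set K := 2 * eta * Rb * m%:R + eta ^+ 2 * m%:R.
have step : forall t, sqnorm (thtil t.+1) <= sqnorm (thtil t) + K.
  move=> t; have [Hp [Hq Hu]] := Hrun t.
  have -> : sqnorm (thtil t.+1) = sqnorm (fun k => thtil t k + (- eta) * g t k).
    by apply: eq_bigr => k _; rewrite Hu /g; congr (_ ^+ 2); ring.
  rewrite sqnormD.
  have hd : - (Rb * m%:R) <= dot (thtil t) (g t).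
    have -> : dot (thtil t) (g t)
        = dot (fun k => thtil t k - th t k) (g t) + dot (th t) (g t).
      by rewrite /dot -big_split; apply: eq_bigr => k _ /=; ring.
    have h1 := proj_dot_ge0 (y t) Hmono Hp Hq.
    have h2 : - (Rb * m%:R) <= dot (th t) (g t).
      have <- : \sum_(k < m) (- Rb) = - (Rb * m%:R).
        by rewrite sumr_const card_ord -mulr_natr; ring.
      apply: ler_sum => k _; rewrite /g /cov.
      exact: (comp_bound (Ha k) (Hy t k) (Hq k)).
    lra.
  have hG : sqnorm (g t) <= m%:R.
    have <- : \sum_(k < m) (1 : R) = m%:R by rewrite sumr_const card_ord.
    by apply: ler_sum => k _; rewrite /g /cov; apply: g_sq_le1.
  have e1 : 0 <= eta ^+ 2 by apply: sqr_ge0.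
  have e2 : eta ^+ 2 * sqnorm (g t) <= eta ^+ 2 * m%:R by apply: ler_wpM2l.
  rewrite /K; nra.
have bound : forall n, sqnorm (thtil n) <= sqnorm th1 + n%:R * K.
  elim=> [|n IH]; first by rewrite H0 mul0r addr0.
  have := step n; rewrite -natr1; nra.
have sumeq : forall n, thtil n i = th1 i - eta * \sum_(t < n) g t i.
  elim=> [|n IH]; first by rewrite H0 big_ord0 mulr0 subr0.
  have [_ [_ Hu]] := Hrun n.
  by rewrite Hu IH big_ord_recr /= /g; ring.
set S := \sum_(t < T) g t i.
have Tpos : 0 < T%:R :> R by rewrite ltr0n.
have Hlhs : (\sum_(t < T) cov (y t) (q t) i) / T%:R - alpha i = S / T%:R.
  have -> : \sum_(t < T) cov (y t) (q t) i = S + T%:R * alpha i.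
    rewrite /S /g sumrB sumr_const card_ord -mulr_natl; ring.
  by field; rewrite gt_eqF.
have HS : S = (th1 i - thtil T i) / eta.
  by rewrite sumeq -/S; field; rewrite gt_eqF.
set N1 := norm2 th1.
set X := m%:R / T%:R + 2 * Rb * (m%:R * Num.sqrt m%:R) / (eta * dA alpha * T%:R).
have N1ge0 : 0 <= N1 by apply: sqrtr_ge0.
have Kge0 : 0 <= K.
  rewrite /K; apply: addr_ge0; last by apply: mulr_ge0; [apply: sqr_ge0 | apply: ler0n].
  by apply: mulr_ge0; [apply: mulr_ge0; [lra | lra] | apply: ler0n].
have TKge0 : 0 <= T%:R * K by apply: mulr_ge0 => //; apply: ltW.
set sK := Num.sqrt (T%:R * K).
have sKge0 : 0 <= sK by apply: sqrtr_ge0.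
have sKsq : sK ^+ 2 = T%:R * K by apply: sqr_sqrtr.
have N1sq : N1 ^+ 2 = sqnorm th1 by apply: sqr_sqrtr; apply: sqnorm_ge0.
have NT : norm2 (thtil T) <= N1 + sK.
  rewrite /norm2 -(ger0_norm (addr_ge0 N1ge0 sKge0)) -sqrtr_sqr ler_sqrt;
    last by apply: sqr_ge0.
  have := bound T; nra.
have Hnum : `|th1 i - thtil T i| <= 2 * N1 + sK.
  have := coord_le_norm th1 i; have := coord_le_norm (thtil T) i.
  rewrite -/N1 => h1 h2.
  apply: (le_trans (ler_normB _ _)); lra.
have D0 : 0 < dA alpha.
  rewrite /dA; apply: (big_ind (fun x => 0 < x)) => //.
    by move=> x z hx hz; rewrite lt_min hx hz.
  move=> k _; have /andP[a0 a1] := Ha k; rewrite lt_min a0 /=; lra.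
have D1 : dA alpha <= 1.
  rewrite /dA; apply: (big_ind (fun x => x <= 1)) => //.
    by move=> x z hx hz; rewrite ge_min hx.
  move=> k _; have /andP[a0 a1] := Ha k; rewrite ge_min; apply/orP; left; lra.
have sm1 : 1 <= Num.sqrt (m%:R : R).
  have m1 : (1 : R) <= m%:R by rewrite ler1n.
  have : Num.sqrt (1:R) <= Num.sqrt (m%:R : R) by rewrite ler_sqrt ?ler0n.
  by rewrite sqrtr1.
have ratio : 1 <= Num.sqrt (m%:R : R) / dA alpha.
  by rewrite ler_pdivlMr // mul1r; lra.
have HX : T%:R * K <= (eta * T%:R) ^+ 2 * X.
  have -> : (eta * T%:R) ^+ 2 * X
      = eta ^+ 2 * T%:R * m%:R + 2 * eta * T%:R * Rb * m%:R * (Num.sqrt m%:R / dA alpha).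
    by rewrite /X; field; rewrite !gt_eqF.
  rewrite /K.
  have hp : 0 <= 2 * eta * T%:R * Rb * m%:R.
    by apply: mulr_ge0; [apply: mulr_ge0; [apply: mulr_ge0; [lra|lra]|lra]|apply: ler0n].
  have := ler_wpM2l hp ratio; nra.
have HsK : sK <= eta * T%:R * Num.sqrt X.
  have eT : 0 <= eta * T%:R by apply: mulr_ge0; lra.
  rewrite -(ger0_norm eT) -sqrtr_sqr -sqrtrM ?sqr_ge0 // ler_sqrt //.
  apply: mulr_ge0; first by apply: sqr_ge0.
  rewrite /X; apply: addr_ge0; first by apply: divr_ge0; [apply: ler0n | lra].
  apply: divr_ge0; last by apply: mulr_ge0; [apply: mulr_ge0|]; lra.
  apply: mulr_ge0; first lra.
  by apply: mulr_ge0; [apply: ler0n | apply: sqrtr_ge0].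
rewrite Hlhs HS.
have eT : 0 < eta * T%:R by apply: mulr_gt0.
have -> : (th1 i - thtil T i) / eta / T%:R = (th1 i - thtil T i) / (eta * T%:R).
  by rewrite invfM mulrA.
rewrite normrM normfV (gtr0_norm eT).
apply: (@le_trans _ _ ((2 * N1 + sK) / (eta * T%:R))).
  by apply: ler_wpM2r; [rewrite invr_ge0 ltW | exact: Hnum].
by rewrite mulrDl lerD2l ler_pdivrMr // [Num.sqrt X * _]mulrC.
Qed.
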